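(* Let $d\geq 7$ and let $f\in C^\infty([0,\infty))$ solve $$f''+\left(\frac{d-1}{y}-\frac{y}{2}\right)f'-\frac{d-1}{2y^2}\sin(2f)=0\quad (y>0)$$ with $f(0)=0$ and $f'(0)=a>0$. Let $h(y)=y^3f'(y)$. Then $h'(y)>0$ for all $y>0$, and $\lim_{y\to\infty}h(y)=+\infty$. *)

(* Defs.v *)
From Stdlib Require Import Reals.
Open Scope R_scope.

(* g' is the derivative of g at x relative to the set [0, +oo):
   two-sided at x > 0, right-sided at x = 0. *)
Definition has_deriv_nonneg (g g' : R -> R) (x : R) : Prop :=
  forall eps : R, 0 < eps -> exists delta : R, 0 < delta /\
    forall h : R, h <> 0 -> Rabs h < delta -> 0 <= x + h ->
      Rabs ((g (x + h) - g x) / h - g' x) < eps.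

(* D is the sequence of derivatives of f on [0, +oo), witnessing
   f \in C^\infty([0,+oo)): D 0 = f on [0,+oo) and each D (S n) is the
   derivative (within [0,+oo)) of D n at every point of [0,+oo).
   (Differentiability of all orders implies continuity of all derivatives.) *)
Definition smooth_nonneg_with (f : R -> R) (D : nat -> R -> R) : Prop :=
  (forall x, 0 <= x -> D 0%nat x = f x) /\
  (forall (n : nat) (x : R), 0 <= x -> has_deriv_nonneg (D n) (D (S n)) x).

(* Main.v *)
Require Import Defs.
From Stdlib Require Import Reals Lra Lia Psatz.
Open Scope R_scope.

Lemma dl_eq f x l l' : derivable_pt_lim f x l -> l = l' -> derivable_pt_lim f x l'.
Proof. intros H ->; exact H. Qed.
Lemma dplus f g x a b : derivable_pt_lim f x a -> derivable_pt_lim g x b ->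
  derivable_pt_lim (fun y => f y + g y) x (a + b).
Proof. intros; now apply derivable_pt_lim_plus. Qed.
Lemma dminus f g x a b : derivable_pt_lim f x a -> derivable_pt_lim g x b ->
  derivable_pt_lim (fun y => f y - g y) x (a - b).
Proof. intros; now apply derivable_pt_lim_minus. Qed.
Lemma dmult f g x a b : derivable_pt_lim f x a -> derivable_pt_lim g x b ->
  derivable_pt_lim (fun y => f y * g y) x (a * g x + f x * b).
Proof. intros; now apply derivable_pt_lim_mult. Qed.
Lemma dopp f x a : derivable_pt_lim f x a -> derivable_pt_lim (fun y => - f y) x (- a).
Proof. intros; now apply derivable_pt_lim_opp. Qed.
Lemma dconst c x : derivable_pt_lim (fun _ => c) x 0.
Proof. apply derivable_pt_lim_const. Qed.
Lemma did x : derivable_pt_lim (fun y => y) x 1.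
Proof. apply derivable_pt_lim_id. Qed.
Lemma dpow n x : derivable_pt_lim (fun y => y ^ n) x (INR n * x ^ pred n).
Proof. apply derivable_pt_lim_pow. Qed.
Lemma dinv_c c x : derivable_pt_lim (fun _ => / c) x 0.
Proof. apply derivable_pt_lim_const. Qed.
Lemma dsin f x a : derivable_pt_lim f x a -> derivable_pt_lim (fun y => sin (f y)) x (cos (f x) * a).
Proof. intros H. apply (derivable_pt_lim_comp f sin x a (cos (f x)) H (derivable_pt_lim_sin _)). Qed.
Lemma dexp f x a : derivable_pt_lim f x a -> derivable_pt_lim (fun y => exp (f y)) x (exp (f x) * a).
Proof. intros H. apply (derivable_pt_lim_comp f exp x a (exp (f x)) H (derivable_pt_lim_exp _)). Qed.
Lemma dln x : 0 < x -> derivable_pt_lim (fun y => ln y) x (/ x).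
Proof. apply derivable_pt_lim_ln. Qed.

Definition Kf (Dd : R) (D : nat -> R -> R) (y : R) :=
  y^2 * D 1%nat y * (y^2 * /2 - (Dd - 4)) + (Dd - 1) * /2 * (y * sin (2 * D 0%nat y)).
Definition Pf (Dd y : R) := exp ((Dd - 5) * ln y - y^2 * /4).
Definition mf Dd D y := Kf Dd D y * Pf Dd y.
Definition Hf (D : nat -> R -> R) y := y^3 * D 1%nat y.

Ltac dtac H0 H1 := repeat first
  [ apply dminus | apply dplus | apply dopp | apply dmult | apply dsin | apply dexp
  | apply H0 | apply H1 | apply dconst | apply did | apply dpow | apply dln ].

Lemma dm Dd D y (hy : 0 < y)
  (H0 : derivable_pt_lim (D 0%nat) y (D 1%nat y))
  (H1 : derivable_pt_lim (D 1%nat) y (D 2%nat y))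
  (hode : D 2%nat y + ((Dd - 1) / y - y / 2) * D 1%nat y
       - (Dd - 1) / (2 * y ^ 2) * sin (2 * D 0%nat y) = 0) :
  derivable_pt_lim (mf Dd D) y
    (Pf Dd y * (Hf D y * (2 * (Dd - 4) + (Dd - 1) * cos (2 * D 0%nat y)) / y^2)).
Proof.
  unfold mf, Kf, Pf, Hf.
  eapply dl_eq.
  { dtac H0 H1. all: try lra. }
  assert (E : D 2%nat y = - ((Dd - 1) / y - y / 2) * D 1%nat y
       + (Dd - 1) / (2 * y ^ 2) * sin (2 * D 0%nat y)) by lra.
  rewrite E. simpl. field. lra.
Qed.

Lemma sinlb u : 0 <= u <= 1 -> u - u^3/6 <= sin u.
Proof.
  intros Hu. assert (HP := PI_RGT_0). assert (2 < PI) by (pose proof PI2_1; lra).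
  destruct (SIN u) as [Hs _]; try lra.
  unfold sin_lb, sin_approx, sin_term in Hs. simpl in Hs.
  eapply Rle_trans; [|exact Hs].
  assert (0 <= u^2 <= 1) by nra.
  assert (u^5/120 - u^7/5040 >= 0).
  { replace (u^5/120 - u^7/5040) with (u^5 * (42 - u^2) / 5040) by field.
    apply Rle_ge, Rmult_le_pos; [apply Rmult_le_pos; [apply pow_le|]|]; lra. }
  simpl. nra.
Qed.

Lemma small Dd D a (hDd : 7 <= Dd) (ha : 0 < a)
  (HA : forall eps, 0 < eps -> exists del, 0 < del /\ forall h, 0 < h < del -> Rabs (D 0%nat h / h - a) < eps)
  (HB : forall eps, 0 < eps -> exists del, 0 < del /\ forall h, 0 < h < del -> Rabs (D 1%nat h - a) < eps) :
  exists ep, 0 < ep /\ forall y, 0 < y <= ep -> 0 < D 1%nat y /\ 0 < Kf Dd D y.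
Proof.
  set (eta := a / (2 * Dd)).
  assert (Heta : 0 < eta) by (unfold eta; apply Rdiv_lt_0_compat; lra).
  assert (Heta2 : eta * (2 * Dd) = a) by (unfold eta; field; lra).
  destruct (HA eta Heta) as [d1 [Hd1 HA1]].
  destruct (HB eta Heta) as [d2 [Hd2 HB1]].
  set (e3 := / (4 * a * Dd)).
  assert (He3 : 0 < e3) by (unfold e3; apply Rinv_0_lt_compat; nra).
  assert (He3' : e3 * (4 * a * Dd) = 1) by (unfold e3; field; nra).
  exists (Rmin (d1/2) (Rmin (d2/2) e3)). split.
  { repeat apply Rmin_glb_lt; lra. }
  intros y [hy1 hy2].
  assert (y <= d1/2) by (eapply Rle_trans; [exact hy2| apply Rmin_l]).
  assert (y <= d2/2) by (eapply Rle_trans; [exact hy2| eapply Rle_trans; [apply Rmin_r| apply Rmin_l]]).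
  assert (y <= e3) by (eapply Rle_trans; [exact hy2| eapply Rle_trans; [apply Rmin_r| apply Rmin_r]]).
  specialize (HA1 y ltac:(lra)). specialize (HB1 y ltac:(lra)).
  apply Rabs_def2 in HA1. apply Rabs_def2 in HB1.
  assert (eta < a) by nra.
  split; [lra|].
  set (r := D 0%nat y / y) in *.
  assert (Hr : D 0%nat y = r * y) by (unfold r; field; lra).
  unfold Kf. rewrite Hr.
  set (u := 2 * (r * y)).
  assert (Hu0 : 0 <= u) by (unfold u; nra).
  assert (Hu1 : u <= 4 * a * y) by (unfold u; nra).
  assert (Hay : 4 * a * y * Dd <= 1) by nra.
  assert (Hu2 : u * Dd <= 1) by nra.
  assert (Hu3 : u <= 1) by nra.
  assert (Hs := sinlb u (conj Hu0 Hu3)).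
  assert (T1 : D 1%nat y * (y^2 * /2 - (Dd - 4)) >= - (a + eta) * (Dd - 4)).
  { assert (0 <= D 1%nat y * (y^2 * /2)) by (apply Rmult_le_pos; [lra| nra]). nra. }
  assert (Huu : u^2 * Dd <= 1) by nra.
  set (t := / (2 * Dd)).
  assert (Ht : t * (2*Dd) = 1) by (unfold t; field; lra).
  assert (Ht0 : 0 < t) by (unfold t; apply Rinv_0_lt_compat; lra).
  assert (T2 : sin u >= u * (1 - t)).
  { assert (u^2 <= 2 * t).
    { replace (u^2) with ((u^2 * Dd) * (2 * t)) by (unfold t; field; lra).
      assert (0 <= u^2 * Dd) by nra. nra. }
    assert (u^3/6 <= u * t) by (simpl in *; nra). lra. }
  assert (T3 : u * (1 - t) >= 2 * (a - eta) * y * (1 - t)).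
  { assert (1 - t >= 0) by nra. assert (u >= 2 * (a - eta) * y) by (unfold u; nra).
    apply Rle_ge, Rmult_le_compat_r; lra. }
  assert (Br : 0 < - (a + eta) * (Dd - 4) + (Dd - 1) * (a - eta) * (1 - t)).
  { assert (eta = a * t) by (unfold eta, t; field; lra). subst eta.
    assert (Dd * t = /2) by nra. nra. }
  assert (y * sin u >= y * (2 * (a - eta) * y * (1 - t))) by nra.
  assert (y^2 * D 1%nat y * (y^2 * /2 - (Dd - 4)) >= y^2 * (- (a + eta) * (Dd - 4))).
  { rewrite Rmult_assoc. apply Rle_ge, Rmult_le_compat_l; nra. }
  assert (0 < y^2 * (- (a + eta) * (Dd - 4) + (Dd - 1) * (a - eta) * (1 - t))) by (apply Rmult_lt_0_compat; nra).
  nra.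
Qed.

Lemma cont_d f x l : derivable_pt_lim f x l -> forall eps, 0 < eps ->
  exists del, 0 < del /\ forall z, Rabs (z - x) < del -> Rabs (f z - f x) < eps.
Proof.
  intros H eps He.
  assert (Hc : continuity_pt f x) by (apply derivable_continuous_pt; exact (exist _ l H)).
  destruct (Hc eps He) as [del [Hd Hz]]. exists del; split; [lra|].
  intros z Hz'. destruct (Req_dec z x) as [->|Hne].
  - rewrite Rminus_diag, Rabs_R0; lra.
  - apply (Hz z). split. split; [exact I| auto]. simpl; unfold Rdist; exact Hz'.
Qed.

Lemma hd_pos g g' y : 0 < y -> has_deriv_nonneg g g' y -> derivable_pt_lim g y (g' y).
Proof.
  intros hy H eps He. destruct (H eps He) as [del [Hd Hh]].
  exists (mkposreal (Rmin del y) (Rmin_glb_lt _ _ _ Hd hy)).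
  intros h Hh0 Hh1. simpl in Hh1.
  apply Hh; auto.
  - eapply Rlt_le_trans; [exact Hh1| apply Rmin_l].
  - assert (Rabs h < y) by (eapply Rlt_le_trans; [exact Hh1| apply Rmin_r]).
    apply Rabs_def2 in H0. lra.
Qed.

Lemma hd_zero g g' : has_deriv_nonneg g g' 0 -> forall eps, 0 < eps ->
  exists del, 0 < del /\ forall h, 0 < h < del -> Rabs ((g h - g 0) / h - g' 0) < eps.
Proof.
  intros H eps He. destruct (H eps He) as [del [Hd Hh]]. exists del; split; auto.
  intros h [h1 h2]. specialize (Hh h). rewrite Rplus_0_l in Hh. apply Hh; try lra.
  rewrite Rabs_pos_eq; lra.
Qed.

Lemma exp_le x y : x <= y -> exp x <= exp y.
Proof. intros [H|H]; [left; now apply exp_increasing| subst; lra]. Qed.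

Theorem mainTheorem4 (d : nat) (f : R -> R) (D : nat -> R -> R) (a : R)
  (hd : (7 <= d)%nat)
  (hsmooth : smooth_nonneg_with f D)
  (hode : forall y : R, 0 < y ->
     D 2%nat y + ((INR d - 1) / y - y / 2) * D 1%nat y
       - (INR d - 1) / (2 * y ^ 2) * sin (2 * f y) = 0)
  (hf0 : f 0 = 0)
  (hf'0 : D 1%nat 0 = a)
  (ha : 0 < a) :
  (forall y : R, 0 < y ->
     exists l : R, derivable_pt_lim (fun z => z ^ 3 * D 1%nat z) y l /\ 0 < l) /\
  (forall M : R, exists Y : R, forall y : R, Y <= y -> M < y ^ 3 * D 1%nat y).
Proof.
  destruct hsmooth as [hD0 hDS].
  set (Dd := INR d).
  assert (hDd : 7 <= Dd) by (unfold Dd; replace 7 with (INR 7) by (simpl; ring); apply le_INR; exact hd).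
  assert (hd0 : forall y, 0 < y -> derivable_pt_lim (D 0%nat) y (D 1%nat y))
    by (intros y hy; apply hd_pos; auto; apply hDS; lra).
  assert (hd1 : forall y, 0 < y -> derivable_pt_lim (D 1%nat) y (D 2%nat y))
    by (intros y hy; apply hd_pos; auto; apply hDS; lra).
  assert (hode' : forall y, 0 < y -> D 2%nat y + ((Dd - 1) / y - y / 2) * D 1%nat y
       - (Dd - 1) / (2 * y ^ 2) * sin (2 * D 0%nat y) = 0).
  { intros y hy. rewrite hD0 by lra. apply hode; auto. }
  assert (dmy : forall y, 0 < y -> derivable_pt_lim (mf Dd D) y
    (Pf Dd y * (Hf D y * (2 * (Dd - 4) + (Dd - 1) * cos (2 * D 0%nat y)) / y^2)))
    by (intros y hy; apply dm; auto).
  assert (dHy : forall y, 0 < y -> derivable_pt_lim (Hf D) y (Kf Dd D y)).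
  { intros y hy. unfold Hf. eapply dl_eq.
    { specialize (hd1 y hy). dtac hd1 hd1. }
    specialize (hode' y hy).
    assert (E : D 2%nat y = - ((Dd - 1) / y - y / 2) * D 1%nat y
       + (Dd - 1) / (2 * y ^ 2) * sin (2 * D 0%nat y)) by lra.
    rewrite E. unfold Kf. simpl. field. lra. }
  assert (dKy : forall y, 0 < y -> exists l, derivable_pt_lim (Kf Dd D) y l).
  { intros y hy. eexists. unfold Kf. specialize (hd0 y hy). specialize (hd1 y hy). dtac hd0 hd1. }
  assert (Ppos : forall y, 0 < Pf Dd y) by (intros; apply exp_pos).
  destruct (small Dd D a hDd ha) as [ep [hep Hsmall]].
  { intros eps He. destruct (hd_zero _ _ (hDS 0%nat 0 (Rle_refl 0)) eps He) as [del [Hd Hh]].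
    exists del; split; auto. intros h Hh0. specialize (Hh h Hh0).
    rewrite (hD0 0 (Rle_refl 0)), hf0, hf'0 in Hh. replace (D 0%nat h / h) with ((D 0%nat h - 0)/h) by (field; lra). exact Hh. }
  { intros eps He. destruct (hd_zero _ _ (hDS 1%nat 0 (Rle_refl 0)) 1 Rlt_0_1) as [del [Hd Hh]].
    set (B := Rabs (D 2%nat 0) + 1).
    assert (HB : 0 < B) by (unfold B; pose proof (Rabs_pos (D 2%nat 0)); lra).
    exists (Rmin del (eps / B)). split. { apply Rmin_glb_lt; auto. apply Rdiv_lt_0_compat; lra. }
    intros h [h1 h2].
    assert (h < del) by (eapply Rlt_le_trans; [exact h2| apply Rmin_l]).
    assert (h < eps / B) by (eapply Rlt_le_trans; [exact h2| apply Rmin_r]).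
    specialize (Hh h (conj h1 H)). rewrite hf'0 in Hh.
    apply Rabs_def2 in Hh. destruct Hh as [Hh1 Hh2].
    pose proof (Rle_abs (D 2%nat 0)). pose proof (Rabs_pos (D 2%nat 0)).
    assert (Rabs (- D 2%nat 0) = Rabs (D 2%nat 0)) by apply Rabs_Ropp.
    pose proof (Rle_abs (- D 2%nat 0)).
    set (q := (D 1%nat h - a) / h) in *.
    assert (- B < q < B) by (unfold B; lra).
    assert (h * B < eps).
    { assert (h * B < eps / B * B) by (apply Rmult_lt_compat_r; lra).
      replace (eps / B * B) with eps in H6 by (field; lra). exact H6. }
    assert (Eq : D 1%nat h - a = h * q) by (unfold q; field; lra).
    rewrite Eq. apply Rabs_def1; nra. }
  assert (mono_m : forall x y, 0 < x <= y -> (forall c, x < c < y -> 0 <= Hf D c) ->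
            mf Dd D x <= mf Dd D y).
  { intros x y [hx hxy] Hc. destruct hxy as [hxy|<-]; [|lra].
    destruct (MVT_cor2 (mf Dd D) _ x y hxy (fun c hc => dmy c ltac:(lra))) as [c [Hc1 Hc2]].
    assert (0 <= Pf Dd c * (Hf D c * (2 * (Dd - 4) + (Dd - 1) * cos (2 * D 0%nat c)) / c ^ 2)).
    { apply Rmult_le_pos; [left; apply Ppos|]. unfold Rdiv. apply Rmult_le_pos.
      - apply Rmult_le_pos; [apply Hc; lra|]. pose proof (COS_bound (2 * D 0%nat c)). nra.
      - left; apply Rinv_0_lt_compat; apply pow_lt; lra. }
    nra. }
  assert (HposK : forall z, ep <= z -> (forall w, ep < w < z -> 0 < Kf Dd D w) -> 0 < Hf D z).
  { intros z hz Hw.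
    assert (0 < Hf D ep) by (unfold Hf; destruct (Hsmall ep (conj hep (Rle_refl _))); apply Rmult_lt_0_compat; [apply pow_lt|]; lra).
    destruct hz as [hz|<-]; [|auto].
    destruct (MVT_cor2 (Hf D) _ ep z hz (fun c hc => dHy c ltac:(lra))) as [c [Hc1 Hc2]].
    specialize (Hw c Hc2). nra. }
  assert (Kpos : forall y, 0 < y -> 0 < Kf Dd D y).
  { intros y hy. destruct (Rle_lt_dec y ep) as [hle|hlt]; [apply Hsmall; lra|].
    apply Rnot_le_lt. intro Hneg.
    set (E := fun x => ep <= x <= y /\ forall z, ep <= z <= x -> 0 < Kf Dd D z).
    assert (Ebound : bound E) by (exists y; intros x [hx _]; lra).
    assert (Eep : E ep).
    { split; [lra|]. intros z hz. replace z with ep by lra. apply Hsmall; lra. }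
    destruct (completeness E Ebound (ex_intro _ ep Eep)) as [s [Hub Hlub]].
    assert (hs1 : ep <= s) by (apply Hub; exact Eep).
    assert (hs2 : s <= y) by (apply Hlub; intros x [hx _]; lra).
    assert (Hbelow : forall z, ep <= z < s -> 0 < Kf Dd D z).
    { intros z hz. destruct (Rlt_le_dec 0 (Kf Dd D z)) as [h|h]; auto. exfalso.
      assert (is_upper_bound E z).
      { intros x [hx Hx]. destruct (Rle_lt_dec x z) as [h'|h']; auto.
        specialize (Hx z ltac:(lra)). lra. }
      specialize (Hlub z H). lra. }
    assert (Ks : 0 < Kf Dd D s).
    { destruct hs1 as [hs1|<-]; [|apply Hsmall; lra].
      assert (mf Dd D ep <= mf Dd D s).
      { apply mono_m; [lra|]. intros c hc. left. apply HposK; [lra|].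
        intros w hw. apply Hbelow. lra. }
      assert (0 < mf Dd D ep).
      { unfold mf. apply Rmult_lt_0_compat; [apply Hsmall; lra| apply Ppos]. }
      unfold mf in *. pose proof (Ppos s).
      destruct (Rlt_le_dec 0 (Kf Dd D s)); auto. nra. }
    assert (hsy : s < y) by (destruct hs2; auto; subst; lra).
    destruct (dKy s ltac:(lra)) as [l Hl].
    destruct (cont_d _ _ _ Hl (Kf Dd D s) Ks) as [del [Hdel Hcont]].
    set (x := Rmin (s + del/2) y).
    assert (hx1 : s < x) by (unfold x; apply Rmin_glb_lt; lra).
    assert (hx2 : x <= s + del/2) by apply Rmin_l.
    assert (hx3 : x <= y) by apply Rmin_r.
    assert (Ex : E x).
    { split; [lra|]. intros z hz. destruct (Rlt_le_dec z s) as [h|h]; [apply Hbelow; lra|].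
      assert (Rabs (z - s) < del) by (rewrite Rabs_pos_eq; lra).
      specialize (Hcont z H). apply Rabs_def2 in Hcont. lra. }
    specialize (Hub x Ex). lra. }
  assert (Hpos : forall y, 0 < y -> 0 < Hf D y).
  { intros y hy. destruct (Rle_lt_dec y ep) as [hle|hlt].
    - unfold Hf. destruct (Hsmall y (conj hy hle)). apply Rmult_lt_0_compat; [apply pow_lt|]; lra.
    - apply HposK; [lra|]. intros w hw. apply Kpos. lra. }
  split.
  { intros y hy. exists (Kf Dd D y). split; [exact (dHy y hy)| apply Kpos; exact hy]. }
  set (E0 := exp ((Dd - 5) ^ 2)).
  assert (hm1 : 0 < mf Dd D 1) by (unfold mf; apply Rmult_lt_0_compat; [apply Kpos; lra| apply Ppos]).
  set (del := mf Dd D 1 / E0).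
  assert (hdel : 0 < del) by (unfold del, E0; apply Rdiv_lt_0_compat; [auto| apply exp_pos]).
  assert (Kbig : forall y, 1 <= y -> del <= Kf Dd D y).
  { intros y hy.
    assert (mf Dd D 1 <= mf Dd D y) by (apply mono_m; [lra|]; intros c hc; left; apply Hpos; lra).
    assert (PE : Pf Dd y <= E0).
    { unfold Pf, E0. apply exp_le.
      pose proof (exp_ineq1_le (ln y)). rewrite exp_ln in H0 by lra.
      assert (0 <= ln y) by (rewrite <- ln_1; destruct hy as [hy'|<-]; [left; apply ln_increasing; lra| lra]).
      assert ((Dd - 5) * ln y <= (Dd - 5) * y) by (apply Rmult_le_compat_l; lra).
      pose proof (pow2_ge_0 (y/2 - (Dd - 5))). simpl in *. nra. }
    unfold mf in H. unfold del. pose proof (Ppos y) as HPy. assert (HE0 : 0 < E0) by apply exp_pos.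
    apply (Rmult_le_reg_r E0); auto. unfold Rdiv. rewrite Rmult_assoc, Rinv_l by lra.
    rewrite Rmult_1_r.
    assert (0 < Kf Dd D y) by (apply Kpos; lra).
    assert (Kf Dd D y * Pf Dd y <= Kf Dd D y * E0) by (apply Rmult_le_compat_l; lra).
    unfold mf. lra. }
  intros M. exists (2 + Rabs M / del + Rabs (Hf D 1) / del).
  intros y hy.
  pose proof (Rabs_pos M). pose proof (Rabs_pos (Hf D 1)).
  assert (0 <= Rabs M / del) by (unfold Rdiv; apply Rmult_le_pos; [lra| left; apply Rinv_0_lt_compat; lra]).
  assert (0 <= Rabs (Hf D 1) / del) by (unfold Rdiv; apply Rmult_le_pos; [lra| left; apply Rinv_0_lt_compat; lra]).
  destruct (MVT_cor2 (Hf D) _ 1 y ltac:(lra) (fun c hc => dHy c ltac:(lra))) as [c [Hc1 Hc2]].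
  specialize (Kbig c ltac:(lra)).
  assert (Hge : Hf D y >= Hf D 1 + del * (y - 1)) by nra.
  assert (del * (y - 1) >= del * (1 + Rabs M / del + Rabs (Hf D 1) / del)) by (apply Rle_ge, Rmult_le_compat_l; lra).
  replace (del * (1 + Rabs M / del + Rabs (Hf D 1) / del)) with (del + Rabs M + Rabs (Hf D 1)) in H3 by (field; lra).
  pose proof (Rle_abs M). pose proof (Rle_abs (- Hf D 1)). rewrite Rabs_Ropp in H5.
  unfold Hf in *. lra.
Qed.
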